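(* Let $Q=\{\bm{x}\in\mathbb{R}^n: A\bm{x}\le\bm{b},\ B\bm{x}\le\bm{d}\}$ be a polytope, where all entries of the matrix $A$ are non-negative and all entries of the matrix $B$ are non-positive, and circuits of $Q$ are taken with respect to this system. Then every circuit $\bm{c}\in\mathbb{R}^n$ of $Q$ with $\bm{c}\ge\bm{0}$ or $\bm{c}\le\bm{0}$ has exactly one non-zero coordinate.
   Context: Circuits: for a polytope $P=\{\bm{x}: D\bm{x}\le \bm{f}\}$ given by a fixed linear system, a nonzero vector $\bm{g}$ is a circuit of $P$ if $\operatorname{supp}(D\bm{g})$ is inclusion-minimal among the sets $\operatorname{supp}(D\bm{y})$ with $\bm{y}\neq\bm{0}$. Here $D$ is the matrix obtained by stacking $A$ over $B$. *)

(* Defs.v *)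
From HB Require Import structures.
From mathcomp Require Import all_boot all_order all_algebra.
Set Implicit Arguments. Unset Strict Implicit. Unset Printing Implicit Defensive.
Import Order.TTheory GRing.Theory Num.Theory.
Local Open Scope ring_scope.

Definition vle (R : realFieldType) (m : nat) (u v : 'cV[R]_m) : Prop :=
  forall i : 'I_m, u i 0 <= v i 0.

Definition polyhedron (R : realFieldType) (m n : nat) (D : 'M[R]_(m, n))
  (f : 'cV[R]_m) : 'cV[R]_n -> Prop :=
  fun x => vle (D *m x) f.

Definition is_polytope (R : realFieldType) (n : nat) (P : 'cV[R]_n -> Prop) : Prop :=
  (exists x, P x) /\
  (exists M : R, forall x, P x -> forall i : 'I_n, `|x i 0| <= M).

Definition supp (R : realFieldType) (m : nat) (v : 'cV[R]_m) : {set 'I_m} :=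
  [set i | v i 0 != 0].

Definition is_circuit (R : realFieldType) (m n : nat) (D : 'M[R]_(m, n))
  (g : 'cV[R]_n) : Prop :=
  g != 0 /\
  forall y : 'cV[R]_n, y != 0 -> supp (D *m y) \subset supp (D *m g) ->
    supp (D *m y) = supp (D *m g).

(* Main.v *)
Require Import Defs.
From HB Require Import structures.
From mathcomp Require Import lra.
From mathcomp Require Import all_boot all_order all_algebra.
Import Order.TTheory GRing.Theory Num.Theory.
Local Open Scope ring_scope.

Lemma mulE (R : realFieldType) m n (D : 'M[R]_(m, n)) (c : 'cV[R]_n) i :
  (D *m c) i 0 = \sum_k D i k * c k 0.
Proof. by rewrite mxE. Qed.

Lemma key (R : realFieldType) m n (D : 'M[R]_(m, n)) (c : 'cV[R]_n) i j :
  ((forall k, 0 <= D i k * c k 0) \/ (forall k, D i k * c k 0 <= 0)) ->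
  (D *m c) i 0 = 0 -> c j 0 != 0 -> D i j = 0.
Proof.
move=> hs; rewrite mulE => h0 cj.
suff : D i j * c j 0 = 0 by move/eqP; rewrite mulf_eq0 (negPf cj) orbF => /eqP.
case: hs => hs.
  by apply: (psumr_eq0P _ h0) => // k _; apply: hs.
apply/eqP; rewrite -oppr_eq0; apply/eqP; move: j {cj}.
have : \sum_k - (D i k * c k 0) = 0 by rewrite sumrN h0 oppr0.
move=> H j; apply: (psumr_eq0P _ H) => // k _; rewrite oppr_ge0; exact: hs.
Qed.

Arguments key {R m n D c i j}.

Lemma colD (R : realFieldType) m n (D : 'M[R]_(m, n)) j i :
  (D *m delta_mx j (0 : 'I_1)) i 0 = D i j.
Proof. by rewrite -colE mxE. Qed.

Lemma gen (R : realFieldType) m n (D : 'M[R]_(m, n)) (c : 'cV[R]_n) :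
  is_circuit D c ->
  (forall i, (forall k, 0 <= D i k * c k 0) \/ (forall k, D i k * c k 0 <= 0)) ->
  (forall j, exists i, D i j != 0) ->
  #|supp c| = 1%N.
Proof.
move=> [cn0 cmin] hs hcol.
have [j cj] : exists j, c j 0 != 0.
  apply/existsP; apply: contraNT cn0; rewrite negb_exists => /forallP H.
  apply/eqP/matrixP => k l; rewrite (ord1 l) mxE; move: (H k); by rewrite negbK => /eqP.
have [i Dij] := hcol j.
have Dci : (D *m c) i 0 != 0.
  by apply: contra Dij => /eqP h; apply/eqP; exact: (key (hs i) h cj).
pose lam := (D *m c) i 0 / D i j.
pose z := c - lam *: delta_mx j (0 : 'I_1).
have Dz k : (D *m z) k 0 = (D *m c) k 0 - lam * D k j.
  rewrite /z mulmxBr -scalemxAr -(colD _ _ _ D j k); set Y := D *m delta_mx _ _; by rewrite !mxE.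
have z0 : z = 0.
  apply/eqP; apply: contraT => zn0.
  have sub : supp (D *m z) \subset supp (D *m c).
    apply/subsetP => k; rewrite !inE; apply: contra => /eqP h.
    by rewrite Dz h (key (hs k) h cj) mulr0 subr0.
  have := cmin _ zn0 sub => /setP /(_ i); rewrite !inE Dci Dz.
  by rewrite /lam divfK // subrr eqxx.
have ce : c = lam *: delta_mx j (0 : 'I_1) by apply/eqP; rewrite -subr_eq0 -/z z0.
have lam0 : lam != 0.
  by apply: contra cj => /eqP l0; rewrite ce l0 scale0r mxE.
have -> : supp c = [set j].
  apply/setP => k; rewrite !inE ce !mxE mulf_eq0 negb_or lam0 /= eqxx andbT.
  by case: (k =P j) => _; rewrite ?oner_eq0 ?eqxx.
by rewrite cards1.
Qed.

Arguments gen {R m n D c}.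

Theorem lemma1 (R : realFieldType) (n m1 m2 : nat)
  (A : 'M[R]_(m1, n)) (B : 'M[R]_(m2, n)) (b : 'cV[R]_m1) (d : 'cV[R]_m2) :
  (forall i j, 0 <= A i j) ->
  (forall i j, B i j <= 0) ->
  is_polytope (polyhedron (col_mx A B) (col_mx b d)) ->
  forall c : 'cV[R]_n,
    is_circuit (col_mx A B) c ->
    (vle 0 c \/ vle c 0) ->
    #|supp c| = 1%N.
Proof.
move=> hA hB [[x0 Px0] [M hM]].
set D := col_mx A B.
have hcol : forall j, exists i, D i j != 0.
  move=> j; apply/existsP; apply: contraT; rewrite negb_exists => /forallP H.
  have De : D *m delta_mx j (0 : 'I_1) = 0.
    by apply/matrixP => k l; rewrite (ord1 l) colD [RHS]mxE; move: (H k); rewrite negbK => /eqP.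
  have M0 : 0 <= M by apply: le_trans (hM _ Px0 j).
  pose y := x0 + (M + 1 - x0 j 0) *: delta_mx j (0 : 'I_1).
  have Py : polyhedron D (col_mx b d) y.
    by rewrite /polyhedron /y mulmxDr -scalemxAr De scaler0 addr0.
  have := hM _ Py j; rewrite /y !mxE !eqxx mulr1 addrC subrK.
  have M1 : 0 <= M + 1 by clear -M0; lra.
  by rewrite (ger0_norm M1) => h; clear -h; lra.
move=> c hc hsgn.
have hsD (c' : 'cV[R]_n) : vle 0 c' -> forall i,
    (forall k, 0 <= D i k * c' k 0) \/ (forall k, D i k * c' k 0 <= 0).
  move=> hc' i; have c'0 k : 0 <= c' k 0 by move: (hc' k); rewrite mxE.
  case E: (split i) => [i'|i']; [left|right] => k; rewrite /D mxE E.
    by rewrite mulr_ge0.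
  by rewrite mulr_le0_ge0.
case: hsgn => hs; first exact: gen hc (hsD c hs) hcol.
have hc' : is_circuit D (- c).
  case: hc => cn0 cmin; split; first by rewrite oppr_eq0.
  have -> : supp (D *m - c) = supp (D *m c).
    by apply/setP => k; rewrite !inE mulmxN mxE oppr_eq0.
  exact: cmin.
have -> : supp c = supp (- c) by apply/setP => k; rewrite !inE mxE oppr_eq0.
by apply: gen hc' (hsD _ _) hcol => k; move: (hs k); rewrite !mxE oppr_ge0.
Qed.
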